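(* Let $K$ be a field of characteristic $0$ such that $K_{\mathrm{ab}}/\mathbb{Q}$ has finite degree, and let $\Lambda$ be its Chevalley–Bass number. (i) $\Lambda$ is the smallest positive integer $L$ such that, for every integer $n>0$, the image of the inflation map $H^1(G_{Ln},\mu_{Ln})\to H^1(K,\mu_{Ln})$ lies in the image of the map $H^1(K,\mu_L)\to H^1(K,\mu_{Ln})$ induced by the inclusion $\mu_L\subseteq\mu_{Ln}$. (ii) $\Lambda$ is the smallest positive integer $L$ such that, for every integer $n>0$, the map $H^1(G_{Ln},\mu_L)\to H^1(G_{Ln},\mu_{Ln})$ induced by the inclusion $\mu_L\subseteq\mu_{Ln}$ is surjective.
   Context: $K_{\mathrm{ab}}$ is the maximal abelian subextension of $K/\mathbb{Q}$. The Chevalley–Bass number of $K$ is the smallest positive integer $\Lambda$ such that for every positive integer $n$, $(K(\zeta_{\Lambda n})^\times)^{\Lambda n}\cap K^\times\subseteq (K^\times)^n$. $\mu_n$ denotes the Galois module of $n$th roots of unity in an algebraic closure of $K$, $\zeta_n$ a primitive $n$th root of unity, $G_n:=\mathrm{Gal}(K(\zeta_n)/K)$; $H^1(K,M)$ denotes Galois cohomology of the absolute Galois group of $K$. *)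

(* Defs.v *)
From HB Require Import structures.
From mathcomp Require Import all_boot all_order all_algebra.
Set Implicit Arguments. Unset Strict Implicit. Unset Printing Implicit Defensive.
Import Order.TTheory GRing.Theory Num.Theory.
Local Open Scope ring_scope.

(* Setting: K a field, L an algebraically closed field, iota : K -> L a
   ring embedding with L algebraic over iota(K); so L is an algebraic
   closure of K and the absolute Galois group of K is the group of field
   automorphisms of L fixing iota(K) pointwise. *)

Definition algebraic_over (K : fieldType) (L : closedFieldType)
  (iota : {rmorphism K -> L}) : Prop :=
  forall y : L, exists p : {poly K}, p != 0 /\ root (map_poly iota p) y.

(* Q(x)/Q is a (finite) abelian Galois extension, x in K algebraic over Q:
   p = minimal polynomial of x over Q (monic irreducible), every conjugate of x
   (root of p in the algebraic closure L) is g(x) for some g in Q[X]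
   (normality), and the automorphisms x |-> g1(x), x |-> g2(x) commute. *)
Definition abelian_elt (K : fieldType) (L : closedFieldType)
  (iota : {rmorphism K -> L}) (x : K) : Prop :=
  exists p : {poly rat},
    [/\ p \is monic, irreducible_poly p, root (map_poly ratr p) x,
        (forall r : L, root (map_poly ratr p) r ->
           exists g : {poly rat}, r = iota (map_poly ratr g).[x])
      & (forall g1 g2 : {poly rat},
           root (map_poly ratr p) (map_poly ratr g1).[x] ->
           root (map_poly ratr p) (map_poly ratr g2).[x] ->
           (map_poly ratr g1).[(map_poly ratr g2).[x]] =
           (map_poly ratr g2).[(map_poly ratr g1).[x]] :> K)].

(* K_ab = maximal abelian subextension of K/Q = set of x generating an abelian
   extension of Q; it has finite degree over Q iff it is spanned over Q by a
   finite family of elements. *)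
Definition Kab_finite (K : fieldType) (L : closedFieldType)
  (iota : {rmorphism K -> L}) : Prop :=
  exists s : seq K, forall y : K, abelian_elt iota y ->
    exists c : 'I_(size s) -> rat, y = \sum_(i < size s) ratr (c i) * s`_i.

Definition in_Kzeta (K : fieldType) (L : closedFieldType)
  (iota : {rmorphism K -> L}) (m : nat) (y : L) : Prop :=
  exists z : L, m.-primitive_root z /\
    exists p : {poly K}, y = (map_poly iota p).[z].

(* (K(zeta_{Ln})^x)^{Ln} ∩ K^x ⊆ (K^x)^n for all n > 0 *)
Definition CB_prop (K : fieldType) (L : closedFieldType)
  (iota : {rmorphism K -> L}) (Lam : nat) : Prop :=
  (0 < Lam)%N /\
  forall n : nat, (0 < n)%N ->
    forall (y : L) (a : K), in_Kzeta iota (Lam * n) y -> y != 0 ->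
      y ^+ (Lam * n) = iota a -> exists b : K, a = b ^+ n.

Definition is_CB_number (K : fieldType) (L : closedFieldType)
  (iota : {rmorphism K -> L}) (Lam : nat) : Prop :=
  CB_prop iota Lam /\ forall M : nat, CB_prop iota M -> (Lam <= M)%N.

Definition isGal (K : fieldType) (L : closedFieldType)
  (iota : {rmorphism K -> L}) (sigma : L -> L) : Prop :=
  [/\ forall x y, sigma (x + y) = sigma x + sigma y,
      forall x y, sigma (x * y) = sigma x * sigma y,
      sigma 1 = 1, bijective sigma & forall a : K, sigma (iota a) = iota a].

Definition cocycle (K : fieldType) (L : closedFieldType)
  (iota : {rmorphism K -> L}) (m : nat) (f : (L -> L) -> L) : Prop :=
  (forall sigma, isGal iota sigma -> f sigma ^+ m = 1) /\
  (forall sigma tau, isGal iota sigma -> isGal iota tau ->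
     f (sigma \o tau) = f sigma * sigma (f tau)).

(* continuity (= local constancy) for the Krull topology: f is constant on
   cosets of the pointwise stabilizer of some finite set of elements of L *)
Definition continuous_coc (K : fieldType) (L : closedFieldType)
  (iota : {rmorphism K -> L}) (f : (L -> L) -> L) : Prop :=
  exists xs : seq L, forall sigma tau, isGal iota sigma -> isGal iota tau ->
    (forall x, x \in xs -> sigma x = tau x) -> f sigma = f tau.

Definition Z1K (K : fieldType) (L : closedFieldType)
  (iota : {rmorphism K -> L}) (m : nat) (f : (L -> L) -> L) : Prop :=
  cocycle iota m f /\ continuous_coc iota f.

(* f factors through the quotient G_K -> G_N = Gal(K(zeta_N)/K), i.e. f is
   the inflation of a function on G_N *)
Definition factors_GN (K : fieldType) (L : closedFieldType)
  (iota : {rmorphism K -> L}) (N : nat) (f : (L -> L) -> L) : Prop :=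
  forall z : L, N.-primitive_root z ->
    forall sigma tau, isGal iota sigma -> isGal iota tau ->
      sigma z = tau z -> f sigma = f tau.

Definition cohom (K : fieldType) (L : closedFieldType)
  (iota : {rmorphism K -> L}) (m : nat) (f g : (L -> L) -> L) : Prop :=
  exists a : L, a ^+ m = 1 /\
    forall sigma, isGal iota sigma -> f sigma = g sigma * (sigma a / a).

Definition prop_i (K : fieldType) (L : closedFieldType)
  (iota : {rmorphism K -> L}) (Lm : nat) : Prop :=
  (0 < Lm)%N /\
  forall n : nat, (0 < n)%N ->
    forall f, cocycle iota (Lm * n) f -> factors_GN iota (Lm * n) f ->
      exists g, Z1K iota Lm g /\ cohom iota (Lm * n) f g.

(* (ii): H^1(G_{Ln}, mu_L) -> H^1(G_{Ln}, mu_{Ln}) is surjective; cocycles of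
   G_N are represented by their inflations to G_K *)
Definition prop_ii (K : fieldType) (L : closedFieldType)
  (iota : {rmorphism K -> L}) (Lm : nat) : Prop :=
  (0 < Lm)%N /\
  forall n : nat, (0 < n)%N ->
    forall f, cocycle iota (Lm * n) f -> factors_GN iota (Lm * n) f ->
      exists g, [/\ cocycle iota Lm g, factors_GN iota (Lm * n) g &
                    cohom iota (Lm * n) f g].

(* Main.v *)
Require Import Defs.
From HB Require Import structures.
From mathcomp Require Import all_boot all_order all_algebra all_field all_solvable.
From mathcomp Require Import boolp classical_sets zify ring.
Set Implicit Arguments. Unset Strict Implicit. Unset Printing Implicit Defensive.
Import GRing.Theory.
Local Open Scope ring_scope.
Section Basic.
Variables (K : fieldType) (L : closedFieldType) (iota : {rmorphism K -> L}).

Lemma E_horner (E : L -> Prop) :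
  (forall a, E (iota a)) -> (forall x y, E x -> E y -> E (x + y)) ->
  (forall x y, E x -> E y -> E (x * y)) ->
  forall (p : {poly K}) x, E x -> E (map_poly iota p).[x].
Proof.
move=> Ei ED EM p x Ex; elim/poly_ind: p => [|p c IH].
  by rewrite rmorph0 horner0 -(rmorph0 iota).
rewrite rmorphD rmorphM /= map_polyX map_polyC /= hornerMXaddC.
by apply: ED; [apply: EM|].
Qed.

Hypothesis algL : algebraic_over iota.

Lemma alg_inv (E : L -> Prop) :
  (forall a, E (iota a)) -> (forall x y, E x -> E y -> E (x + y)) ->
  (forall x y, E x -> E y -> E (x * y)) ->
  forall x, E x -> x != 0 -> E x^-1.
Proof.
move=> Ei ED EM x Ex x0.
have [p0 [p0n0 rp0]] := algL x.
have key : forall n (p : {poly K}), (size p <= n)%N -> p != 0 ->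
    root (map_poly iota p) x ->
    exists p1 : {poly K}, p1.[0] != 0 /\ root (map_poly iota p1) x.
  elim=> [|n IH] p.
    by rewrite leqn0 size_poly_eq0 => /eqP ->; rewrite eqxx.
  move=> sp pn0 rp.
  have [z0|z0] := eqVneq p.[0] 0; last by exists p.
  have /factor_theorem [q Dq] : root p 0 by apply/eqP.
  rewrite subr0 in Dq.
  have qn0 : q != 0 by apply: contraNneq pn0 => q0; rewrite Dq q0 mul0r.
  apply: (IH q).
  - by move: sp; rewrite Dq size_mulX // ltnS.
  - exact: qn0.
  move: rp; rewrite Dq /root rmorphM /= map_polyX hornerMX mulf_eq0 (negPf x0) orbF.
  by [].
have [p1 [p10 rp1]] := key _ p0 (leqnn _) p0n0 rp0.
set c := p1.[0].
have /factor_theorem [q Dq] : root (p1 - c%:P) 0 by rewrite /root hornerD hornerN hornerC subrr.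
rewrite subr0 in Dq.
have Dp1 : p1 = q * 'X + c%:P by rewrite -Dq subrK.
move: rp1; rewrite Dp1 /root rmorphD rmorphM /= map_polyX map_polyC /= hornerMXaddC.
move=> /eqP Hq.
have -> : x^-1 = (map_poly iota q).[x] * iota (- c^-1).
  rewrite rmorphN fmorphV /= mulrN.
  have ic0 : iota c != 0 by rewrite fmorph_eq0.
  have e : (map_poly iota q).[x] * x = - iota c by apply/eqP; rewrite -subr_eq0 opprK; apply/eqP.
  apply: (mulIf x0); rewrite mulVf // mulNr mulrAC e mulNr opprK mulfV //.
by apply: (EM); [exact: (E_horner Ei ED EM)|exact: Ei].
Qed.


Definition good (G : L * L -> Prop) :=
  [/\ (forall x y1 y2, G (x, y1) -> G (x, y2) -> y1 = y2),
      (forall a, G (iota a, iota a)) &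
      (forall x1 y1 x2 y2, G (x1, y1) -> G (x2, y2) ->
          G (x1 + x2, y1 + y2) /\ G (x1 * x2, y1 * y2))].

Section Good.
Variable G : L * L -> Prop.
Hypothesis hG : good G.

Definition dom x := exists y, G (x, y).
Definition phi x := xget 0 (fun y => G (x, y)).

Lemma phiP x : dom x -> G (x, phi x).
Proof. by move=> h; have := @xgetPex _ 0 (fun y : L => G (x, y)) h. Qed.

Lemma phi_eq x y : G (x, y) -> phi x = y.
Proof. by case: hG => f _ _ h; apply: (f x); [apply: phiP; exists y|]. Qed.

Lemma dom_iota a : dom (iota a).
Proof. by case: hG => _ hi _; exists (iota a). Qed.

Lemma phi_iota a : phi (iota a) = iota a.
Proof. by case: hG => _ hi _; apply: phi_eq. Qed.

Lemma domD x y : dom x -> dom y -> dom (x + y).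
Proof. by case: hG => _ _ hc [u hu] [v hv]; exists (u + v); case: (hc _ _ _ _ hu hv). Qed.

Lemma domM x y : dom x -> dom y -> dom (x * y).
Proof. by case: hG => _ _ hc [u hu] [v hv]; exists (u * v); case: (hc _ _ _ _ hu hv). Qed.

Lemma phiD x y : dom x -> dom y -> phi (x + y) = phi x + phi y.
Proof.
move=> dx dy; apply: phi_eq; case: hG => _ _ hc.
by case: (hc _ _ _ _ (phiP dx) (phiP dy)).
Qed.

Lemma phiM x y : dom x -> dom y -> phi (x * y) = phi x * phi y.
Proof.
move=> dx dy; apply: phi_eq; case: hG => _ _ hc.
by case: (hc _ _ _ _ (phiP dx) (phiP dy)).
Qed.

Lemma dom0 : dom 0. Proof. by rewrite -(rmorph0 iota); apply: dom_iota. Qed.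
Lemma dom1 : dom 1. Proof. by rewrite -(rmorph1 iota); apply: dom_iota. Qed.
Lemma phi0 : phi 0 = 0. Proof. by rewrite -(rmorph0 iota) phi_iota. Qed.
Lemma phi1 : phi 1 = 1. Proof. by rewrite -(rmorph1 iota) phi_iota. Qed.

Lemma domN x : dom x -> dom (- x).
Proof. by move=> dx; rewrite -mulrN1 -(rmorphN1 iota); apply: domM dx (dom_iota _). Qed.

Lemma phiN x : dom x -> phi (- x) = - phi x.
Proof.
move=> dx; rewrite -mulrN1 -(rmorphN1 iota) phiM //; last exact: dom_iota.
by rewrite phi_iota rmorphN1 mulrN1.
Qed.

Lemma domV x : dom x -> dom x^-1.
Proof.
move=> dx; have [->|x0] := eqVneq x 0; first by rewrite invr0; exact: dom0.
exact: (alg_inv dom_iota domD domM dx x0).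
Qed.

Lemma dom_sum (I : Type) (r : seq I) (P : pred I) (F : I -> L) :
  (forall i, P i -> dom (F i)) ->
  dom (\sum_(i <- r | P i) F i) /\ phi (\sum_(i <- r | P i) F i) = \sum_(i <- r | P i) phi (F i).
Proof.
move=> hF; apply: (big_ind2 (fun x y => dom x /\ phi x = y)).
- by split; [apply: dom0|apply: phi0].
- by move=> x1 x2 y1 y2 [d1 e1] [d2 e2]; split; [apply: domD|rewrite phiD // e1 e2].
- by move=> i Pi; split; [apply: hF|].
Qed.

Lemma dom_sum1 (I : Type) (r : seq I) (P : pred I) (F : I -> L) :
  (forall i, P i -> dom (F i)) -> dom (\sum_(i <- r | P i) F i).
Proof. by move=> h; case: (dom_sum r h). Qed.

Lemma phi_sum (I : Type) (r : seq I) (P : pred I) (F : I -> L) :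
  (forall i, P i -> dom (F i)) ->
  phi (\sum_(i <- r | P i) F i) = \sum_(i <- r | P i) phi (F i).
Proof. by move=> h; case: (dom_sum r h). Qed.

Definition pD (p : {poly L}) := forall i, dom p`_i.
Definition Pm (p : {poly L}) : {poly L} := \poly_(i < size p) phi p`_i.

Lemma coef_Pm p i : (Pm p)`_i = phi p`_i.
Proof.
rewrite coef_poly; case: ltnP => // h.
by rewrite nth_default // phi0.
Qed.

Lemma pD_add p q : pD p -> pD q -> pD (p + q).
Proof. by move=> hp hq i; rewrite coefD; apply: domD. Qed.
Lemma pD_opp p : pD p -> pD (- p).
Proof. by move=> hp i; rewrite coefN; apply: domN. Qed.
Lemma pD_mul p q : pD p -> pD q -> pD (p * q).
Proof.
move=> hp hq i; rewrite coefM.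
by apply: dom_sum1 => j _; apply: domM.
Qed.
Lemma pD_C c : dom c -> pD c%:P.
Proof. by move=> hc i; rewrite coefC; case: ifP => _ //; apply: dom0. Qed.
Lemma pD_X : pD 'X.
Proof. by move=> i; rewrite coefX; case: (i == 1)%N; [apply: dom1|apply: dom0]. Qed.
Lemma pD_Xn n : pD 'X^n.
Proof. by move=> i; rewrite coefXn; case: (i == n)%N; [apply: dom1|apply: dom0]. Qed.
Lemma pD_scale c p : dom c -> pD p -> pD (c *: p).
Proof. by move=> hc hp i; rewrite coefZ; apply: domM. Qed.

Lemma Pm_add p q : pD p -> pD q -> Pm (p + q) = Pm p + Pm q.
Proof. by move=> hp hq; apply/polyP => i; rewrite coefD !coef_Pm coefD phiD. Qed.
Lemma Pm_opp p : pD p -> Pm (- p) = - Pm p.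
Proof. by move=> hp; apply/polyP => i; rewrite coefN !coef_Pm coefN phiN. Qed.
Lemma Pm_mul p q : pD p -> pD q -> Pm (p * q) = Pm p * Pm q.
Proof.
move=> hp hq; apply/polyP => i; rewrite coef_Pm !coefM.
rewrite phi_sum; last by move=> j _; apply: domM.
by apply: eq_bigr => j _; rewrite phiM // !coef_Pm.
Qed.
Lemma Pm_C c : dom c -> Pm c%:P = (phi c)%:P.
Proof. by move=> hc; apply/polyP => i; rewrite coef_Pm !coefC; case: ifP => _ //; rewrite phi0. Qed.
Lemma Pm_X : Pm 'X = 'X.
Proof. by apply/polyP => i; rewrite coef_Pm !coefX; case: (i == 1)%N; rewrite ?phi1 ?phi0. Qed.

Lemma pD0 : pD 0.
Proof. by move=> i; rewrite coef0; exact: dom0. Qed.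

Lemma pD_div (q : {poly L}) : pD q -> q \is monic -> forall p, pD p ->
  exists s r, [/\ pD s, pD r, (size r < size q)%N & p = q * s + r].
Proof.
move=> hq mq; have sq : (0 < size q)%N by rewrite size_poly_gt0 monic_neq0.
move=> p; move: {2}(size p).+1 (ltnSn (size p)) => n.
elim: n p => [|n IH] p // sp hp.
have [hlt|hge] := ltnP (size p) (size q).
  by exists 0, p; split => //; [exact: pD0|rewrite mulr0 add0r].
set d := (size p - size q)%N.
set m := lead_coef p *: 'X^d.
have hm : pD m by apply: pD_scale; [rewrite lead_coefE|apply: pD_Xn].
set p1 := p - q * m.
have hp1 : pD p1 by apply: pD_add => //; apply: pD_opp; apply: pD_mul.
have sp1 : (size p1 <= (size p).-1)%N.
  apply/leq_sizeP => j hj.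
  rewrite /p1 coefB /m -scalerAr coefZ coefMXn.
  have -> : (j < d)%N = false by apply/negbTE; rewrite -leqNgt; rewrite /d; lia.
  have [ej|nej] := eqVneq j (size p).-1.
    have -> : (j - d)%N = (size q).-1 by rewrite ej /d; lia.
    by rewrite -lead_coefE (monicP mq) mulr1 ej -lead_coefE subrr.
  have hj2 : ((size p).-1 < j)%N by rewrite ltn_neqAle eq_sym nej hj.
  have hj3 : (size p <= j)%N by move: hj2; rewrite prednK // (leq_trans sq hge).
  rewrite /d nth_default //.
  by rewrite nth_default ?mulr0 ?subrr // leq_subRL ?subnK //; apply: leq_trans (leq_subr _ _) hj3.
have sp1' : (size p1 < n)%N.
  by apply: leq_ltn_trans sp1 _; rewrite prednK ?(leq_trans sq hge).
have [s1 [r1 [hs1 hr1 sr1 e1]]] := IH p1 sp1' hp1.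
exists (m + s1), r1; split => //; first by apply: pD_add.
by rewrite mulrDr -addrA -e1 /p1 addrC subrK.
Qed.

Lemma size_Pm q : q \is monic -> size (Pm q) = size q.
Proof.
move=> mq; apply/eqP; rewrite eqn_leq size_poly /=.
have sq : (0 < size q)%N by rewrite size_poly_gt0 monic_neq0.
rewrite -[X in (X <= _)%N](prednK sq) ltnNge; apply/negP => /leq_sizeP /(_ _ (leqnn _)).
by rewrite coef_Pm -lead_coefE (monicP mq) phi1; apply/eqP; exact: oner_neq0.
Qed.

Section Step.
Variable y : L.
Hypothesis hy : ~ dom y.

Lemma minpoly_ex : exists q, [/\ pD q, q \is monic, root q y &
  forall p, pD p -> p != 0 -> root p y -> (size q <= size p)%N].
Proof.
have [p0 [p0n rp0]] := algL y.
have hP : exists n, `[< exists p, [/\ pD p, p != 0, root p y & size p = n] >].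
  exists (size (map_poly iota p0)); apply/asboolP; exists (map_poly iota p0); split => //.
  - by move=> i; rewrite coef_map; apply: dom_iota.
  - by rewrite map_poly_eq0.
have [n /asboolP [q0 [hq0 q0n rq0 sq0]] minn] := ex_minnP hP.
have c0 : lead_coef q0 != 0 by rewrite lead_coef_eq0.
exists ((lead_coef q0)^-1 *: q0); split.
- by apply: pD_scale => //; apply: domV; rewrite lead_coefE; apply: hq0.
- by apply/monicP; rewrite lead_coefZ mulVf.
- by rewrite /root hornerZ (eqP rq0) mulr0.
- move=> p hp pn rp; rewrite size_scale ?invr_eq0 // sq0; apply: minn.
  by apply/asboolP; exists p.
Qed.

Lemma minpoly_div q : pD q -> q \is monic -> root q y ->
  (forall p, pD p -> p != 0 -> root p y -> (size q <= size p)%N) ->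
  forall p, pD p -> root p y -> exists s, pD s /\ p = q * s.
Proof.
move=> hq mq rq hmin p hp rp.
have [s [r [hs hr sr e]]] := pD_div hq mq hp.
exists s; split => //.
suff r0 : r = 0 by rewrite e r0 addr0.
apply/eqP; apply: contraTT sr => rn; rewrite -leqNgt; apply: hmin => //.
have -> : r = p - q * s by rewrite e addrC addKr.
by rewrite /root hornerD hornerN hornerM (eqP rp) (eqP rq) mul0r subrr.
Qed.

Lemma ext_step : exists q, [/\ pD q, q \is monic, root q y,
  (forall p, pD p -> p != 0 -> root p y -> (size q <= size p)%N) &
  forall y', root (Pm q) y' -> exists G' : L * L -> Prop,
     [/\ good G', (forall u, G u -> G' u) & G' (y, y')]].
Proof.
have [q [hq mq rq hmin]] := minpoly_ex.
exists q; split => // y' ry'.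
exists (fun uv => exists p, pD p /\ uv = (p.[y], (Pm p).[y'])); split.
- split.
  + move=> x y1 y2 [p1 [h1 [e1 e1']]] [p2 [h2 [e2 e2']]].
    have r12 : root (p1 - p2) y by rewrite /root hornerD hornerN -e1 -e2 subrr.
    have [s [hs es]] := minpoly_div hq mq rq hmin (pD_add h1 (pD_opp h2)) r12.
    have E : Pm (p1 - p2) = Pm q * Pm s by rewrite es Pm_mul.
    have hn : pD (- p2) by apply: pD_opp.
    rewrite (Pm_add h1 hn) (Pm_opp h2) in E.
    apply/eqP; rewrite -subr_eq0 e1' e2' -hornerN -hornerD E hornerM (eqP ry') mul0r.
    by [].
  + move=> a; exists (iota a)%:P; split; first by apply: pD_C; apply: dom_iota.
    by rewrite Pm_C ?phi_iota ?hornerC //; apply: dom_iota.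
  + move=> x1 y1 x2 y2 [p1 [h1 [e1 e1']]] [p2 [h2 [e2 e2']]]; split.
    * exists (p1 + p2); split; first by apply: pD_add.
      by rewrite Pm_add // !hornerD e1 e2 e1' e2'.
    * exists (p1 * p2); split; first by apply: pD_mul.
      by rewrite Pm_mul // !hornerM e1 e2 e1' e2'.
- move=> [x v] hxv; have dx : dom x by exists v.
  exists x%:P; split; first by apply: pD_C.
  by rewrite Pm_C // !hornerC (phi_eq hxv).
- by exists 'X; split; [apply: pD_X|rewrite Pm_X !hornerX].
Qed.

End Step.

End Good.


Lemma dom_natmul G : good G -> forall x n, dom G x -> dom G (x *+ n).
Proof. by move=> hG x n dx; rewrite -mulr_natr -(rmorph_nat iota); apply: domM dx (dom_iota hG _). Qed.

Lemma root_Pm_ex G : good G -> forall y q, pD G q -> q \is monic -> root q y ->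
  exists y', root (Pm G q) y'.
Proof.
move=> hG y q hq mq rq; apply/closed_rootP; rewrite size_Pm //.
apply/eqP => /eqP/size_poly1P [c c0 qc].
by move: rq; rewrite qc /root hornerC (negPf c0).
Qed.

Section Char0.
Hypothesis char0 : forall n, ((n%:R : L) == 0) = (n == 0)%N.

Lemma other_root G : good G -> forall y, ~ dom G y -> forall q, pD G q -> q \is monic -> root q y ->
  (forall p, pD G p -> p != 0 -> root p y -> (size q <= size p)%N) ->
  exists y', root q y' /\ y' != y.
Proof.
move=> hG y hy q hq mq rq hmin.
have qn0 : q != 0 by apply: monic_neq0.
have /factor_theorem [h qh] := rq.
have hn0 : h != 0 by apply: contraNneq qn0 => h0; rewrite qh h0 mul0r.
set q' := q^`().
have hq' : pD G q' by move=> i; rewrite coef_deriv; apply: dom_natmul.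
have sq : (0 < size q)%N by rewrite size_poly_gt0.
have sq1 : size q != 1%N.
  apply/eqP => /eqP/size_poly1P [c c0 qc].
  by move: rq; rewrite qc /root hornerC (negPf c0).
have sq2 : (1 < size q)%N by move: sq sq1; case: (size q) => [|[|]].
have q'n0 : q' != 0.
  apply/eqP => /polyP /(_ (size q).-2); rewrite coef_deriv coef0.
  have -> : (size q).-2.+1 = (size q).-1 by move: sq2; case: (size q) => [|[|]].
  rewrite -lead_coefE (monicP mq) -mulr_natl mulr1.
  by move/eqP; rewrite char0; move: sq2; case: (size q) => [|[|]].
have nrq' : ~~ root q' y.
  apply/negP => r'; have := hmin _ hq' q'n0 r'.
  by rewrite leqNgt lt_size_deriv.
have hy0 : h.[y] != 0.
  by move: nrq'; rewrite /q' qh derivM derivXsubC mulr1 /root hornerD hornerM hornerXsubC subrr mulr0 add0r.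
have sh1 : size h != 1%N.
  apply/eqP => /eqP/size_poly1P [c c0 hc].
  apply: hy; move: qh; rewrite hc => qc.
  have c1 : c = 1.
    by move/monicP: mq; rewrite qc lead_coefM lead_coefC lead_coefXsubC mulr1.
  have e0 : q`_0 = - y.
    by rewrite qc c1 mul1r coefB coefX coefC /= sub0r.
  by rewrite -[y]opprK -e0; apply: domN => //; apply: hq.
have [y' ry'] : exists y', root h y' by apply/closed_rootP.
exists y'; split.
  by rewrite qh /root hornerM (eqP ry') mul0r.
by apply: contraNneq hy0 => <-; exact: ry'.
Qed.

End Char0.


Lemma good_total G1 : good G1 ->
  exists H, [/\ good H, (forall u, G1 u -> H u) & forall x, dom H x].
Proof.
move=> hG1.
have chain : forall F : set (set (L * L)),
    (F `<=` (fun A : set (L * L) => good (A `|` G1)))%classic ->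
    total_on F subset ->
    good ((\bigcup_(X in F) X) `|` G1)%classic.
  move=> F FP Ftot.
  set U := ((\bigcup_(X in F) X) `|` G1)%classic.
  have claim : forall u v, U u -> U v -> exists Y : L * L -> Prop,
      [/\ good Y, Y u, Y v & forall w, Y w -> U w].
    have incl : forall X, F X -> forall w, (X `|` G1)%classic w -> U w.
      by move=> X FX w [Xw|Gw]; [left; exists X|right].
    move=> u v [[X1 FX1 Xu]|Gu] [[X2 FX2 Xv]|Gv].
    - have [s12|s21] := Ftot _ _ FX1 FX2.
      + exists (X2 `|` G1)%classic; split; [exact: FP|left; exact: s12|by left|exact: incl].
      + exists (X1 `|` G1)%classic; split; [exact: FP|by left|left; exact: s21|exact: incl].
    - exists (X1 `|` G1)%classic; split; [exact: FP|by left|by right|exact: incl].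
    - exists (X2 `|` G1)%classic; split; [exact: FP|by right|by left|exact: incl].
    - exists G1; split => // w Gw; by right.
  split.
  - move=> x y1 y2 h1 h2; have [Y [[fY _ _] Y1 Y2 _]] := claim _ _ h1 h2.
    exact: fY Y1 Y2.
  - by move=> a; right; case: hG1.
  - move=> x1 y1 x2 y2 h1 h2; have [Y [[_ _ cY] Y1 Y2 YU]] := claim _ _ h1 h2.
    by have [c1 c2] := cY _ _ _ _ Y1 Y2; split; apply: YU.
have [A [PA Amax]] := Zorn_bigcup chain.
exists (A `|` G1)%classic; split => //; first by move=> u Gu; right.
move=> x; apply: contrapT => hx.
have [q [hq mq rq hmin ext]] := ext_step PA x.
have [y' ry'] := root_Pm_ex PA hq mq rq.
have [G' [gG' sub hxy']] := ext y' ry'.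
apply: (Amax G').
  split; first by move=> u Au; apply: sub; left.
  move/(_ _ hxy') => Axy; apply: hx; exists y'; by left.
have -> : (G' `|` G1)%classic = G' by apply/setUidPl => u Gu; apply: sub; right.
exact: gG'.
Qed.


Section Hom.
Variable s : L -> L.
Hypotheses (sD : forall x y, s (x + y) = s x + s y) (sM : forall x y, s (x * y) = s x * s y)
  (s1 : s 1 = 1) (si : forall a, s (iota a) = iota a).

Lemma hom0 : s 0 = 0.
Proof. by rewrite -(rmorph0 iota) si. Qed.

Lemma homN x : s (- x) = - s x.
Proof. by apply/eqP; rewrite -subr_eq0 opprK -sD addNr hom0. Qed.

Lemma homX x n : s (x ^+ n) = s x ^+ n.
Proof. by elim: n => [|n IH]; rewrite ?expr0 ?s1 // !exprS sM IH. Qed.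

Lemma hom_horner (p : {poly K}) w : s ((map_poly iota p).[w]) = (map_poly iota p).[s w].
Proof.
elim/poly_ind: p => [|p c IH]; first by rewrite rmorph0 !horner0 hom0.
by rewrite rmorphD rmorphM /= map_polyX map_polyC /= !hornerMXaddC sD sM IH si.
Qed.

Lemma hom_inj : injective s.
Proof.
move=> u v e; apply/eqP; rewrite -subr_eq0; apply/negPn/negP => h.
have : s (u - v) * s ((u - v)^-1) = 1 by rewrite -sM mulfV.
by rewrite sD homN e subrr mul0r => /eqP; rewrite eq_sym oner_eq0.
Qed.

Lemma homV x : s (x^-1) = (s x)^-1.
Proof.
have [->|x0] := eqVneq x 0; first by rewrite invr0 hom0 invr0.
have sx0 : s x != 0.
  by apply/eqP => h; move/eqP: x0; apply; apply: hom_inj; rewrite h hom0.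
by apply: (mulfI sx0); rewrite -sM !mulfV.
Qed.

Lemma hom_surj z : exists w, s w = z.
Proof.
have [p0 [p0n rp0]] := algL z.
set P := map_poly iota p0.
have Pn : P != 0 by rewrite map_poly_eq0.
have [rs Prs] := closed_field_poly_normal P.
have lc0 : lead_coef P != 0 by rewrite lead_coef_eq0.
have rootE w : root P w = (w \in rs).
  by rewrite Prs /root hornerZ mulf_eq0 (negPf lc0) /= -/(root _ w) root_prod_XsubC.
set t2 := undup rs; set t1 := map s t2.
have [_ e12] : ((size t1 = size t2) * (t1 =i t2))%type.
  apply: uniq_min_size.
  - by rewrite map_inj_uniq ?undup_uniq //; apply: hom_inj.
  - move=> w /mapP [u]; rewrite mem_undup => hu ->.
    by rewrite mem_undup -rootE /root /P -hom_horner; move: hu; rewrite -rootE => /eqP ->; rewrite hom0.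
  - by rewrite size_map.
have : z \in t1 by rewrite e12 mem_undup -rootE.
by move/mapP => [w _ ->]; exists w.
Qed.

End Hom.


Lemma isGal_of (s : L -> L) :
  (forall x y, s (x + y) = s x + s y) -> (forall x y, s (x * y) = s x * s y) ->
  s 1 = 1 -> (forall a, s (iota a) = iota a) -> isGal iota s.
Proof.
move=> sD sM s1 si; split => //.
pose g := fun z => xget 0 (fun w => s w = z).
have sg z : s (g z) = z.
  by have := @xgetPex _ 0 (fun w => s w = z) (hom_surj sD sM s1 si z).
exists g => [w|z]; [apply: (hom_inj sD sM s1 si); exact: sg|exact: sg].
Qed.

Theorem fixed_in_K (char0 : forall n, ((n%:R : L) == 0) = (n == 0)%N) x :
  (forall s, isGal iota s -> s x = x) -> exists a, x = iota a.
Proof.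
move=> hfix; apply: contrapT => hx.
pose G0 := fun uv : L * L => exists a, uv = (iota a, iota a).
have hG0 : good G0.
  split.
  - by move=> u y1 y2 [a [e1 e2]] [b [e3 e4]]; rewrite e2 e4 -e1 -e3.
  - by move=> a; exists a.
  - move=> x1 y1 x2 y2 [a [-> ->]] [b [-> ->]]; split.
    + by exists (a + b); rewrite rmorphD.
    + by exists (a * b); rewrite rmorphM.
have ndx : ~ dom G0 x by move=> [y [a [e _]]]; apply: hx; exists a.
have [q [hq mq rq hmin ext]] := ext_step hG0 x.
have [y' [ry' ny']] := other_root char0 hG0 ndx hq mq rq hmin.
have PmE : Pm G0 q = q.
  apply/polyP => i; rewrite (coef_Pm hG0); have [v [a [e _]]] := hq i.
  by rewrite e (phi_iota hG0).
have ry2 : root (Pm G0 q) y' by rewrite PmE.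
have [G1 [gG1 sub1 hxy]] := ext y' ry2.
have [H [gH subH totH]] := good_total gG1.
have hs : isGal iota (phi H).
  apply: isGal_of.
  - by move=> u v; apply: phiD.
  - by move=> u v; apply: phiM.
  - exact: phi1.
  - exact: phi_iota.
have := hfix _ hs; rewrite (phi_eq gH (subH _ hxy)) => e.
by rewrite e eqxx in ny'.
Qed.

End Basic.
Lemma prim_root_exists (L : closedFieldType) (N : nat) :
  (forall n, ((n%:R : L) == 0) = (n == 0)%N) -> (0 < N)%N ->
  exists z : L, N.-primitive_root z.
Proof.
move=> char0 N0.
set P : {poly L} := 'X^N - 1.
have mP : P \is monic by apply: monicXnsubC.
have [rs Prs] := closed_field_poly_normal P.
rewrite (monicP mP) scale1r in Prs.
have sepP : separable_poly P.
  rewrite unlock; apply/Bezout_coprimepP; exists (-1, (N%:R)^-1 *: 'X) => /=.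
  have -> : P^`() = 'X^(N.-1) *+ N by rewrite /P derivB derivXn derivC subr0.
  have N0' : (N%:R : L) != 0 by rewrite char0 -lt0n.
  rewrite mulrnAr -scalerAl scalerMnl -mulr_natr mulVf // scale1r.
  rewrite -exprS prednK // /P mulN1r opprB subrK.
  exact: eqpxx.
have urs : uniq rs by rewrite -separable_prod_XsubC -Prs.
have hrs : all N.-unity_root rs.
  apply/allP => r hr; rewrite unity_rootE -subr_eq0.
  have : root P r by rewrite Prs root_prod_XsubC.
  by rewrite /root /P hornerD hornerN hornerXn hornerC.
have srs : (N <= size rs)%N.
  have := size_XnsubC (1 : L) N0; rewrite polyC1 -/P Prs size_prod_XsubC => -[->].
  by [].
have /hasP [z _ hz] := has_prim_root N0 hrs urs srs.
by exists z.
Qed.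

Section Kummer.
Variables (K : fieldType) (L : closedFieldType) (iota : {rmorphism K -> L}).
Hypothesis algL : algebraic_over iota.

Section GalFacts.
Variable s : L -> L.
Hypothesis gs : isGal iota s.

Lemma galD x y : s (x + y) = s x + s y. Proof. by case: gs. Qed.
Lemma galM x y : s (x * y) = s x * s y. Proof. by case: gs. Qed.
Lemma gal1 : s 1 = 1. Proof. by case: gs. Qed.
Lemma gali a : s (iota a) = iota a. Proof. by case: gs. Qed.
Lemma gal0 : s 0 = 0. Proof. exact: (hom0 gali). Qed.
Lemma galV x : s x^-1 = (s x)^-1. Proof. exact: (homV galD galM gal1 gali). Qed.
Lemma galX x n : s (x ^+ n) = s x ^+ n. Proof. exact: (homX galM gal1). Qed.
Lemma gal_inj : injective s. Proof. exact: (hom_inj galD galM gal1 gali). Qed.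
Lemma gal_horner (p : {poly K}) w : s ((map_poly iota p).[w]) = (map_poly iota p).[s w].
Proof. exact: (hom_horner galD galM gali). Qed.
Lemma galDiv x y : s (x / y) = s x / s y. Proof. by rewrite galM galV. Qed.
Lemma gal_sum (I : Type) (r : seq I) (P : pred I) (F : I -> L) :
  s (\sum_(i <- r | P i) F i) = \sum_(i <- r | P i) s (F i).
Proof. by apply: (big_morph s galD gal0). Qed.
Lemma gal_neq0 x : x != 0 -> s x != 0.
Proof. by move=> x0; apply/eqP => h; move/eqP: x0; apply; apply: gal_inj; rewrite h gal0. Qed.

End GalFacts.

Lemma gal_comp s t : isGal iota s -> isGal iota t -> isGal iota (s \o t).
Proof.
move=> gs gt; split => /=.
- by move=> x y; rewrite !galD.
- by move=> x y; rewrite !galM.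
- by rewrite !gal1.
- by case: gs => _ _ _ bs _; case: gt => _ _ _ bt _; apply: bij_comp.
- by move=> a; rewrite !gali.
Qed.

Lemma gal_id : isGal iota id.
Proof. by split => //; exists id. Qed.

Lemma gal_inv s : isGal iota s -> exists s', [/\ isGal iota s', cancel s s' & cancel s' s].
Proof.
move=> gs; case: (gs) => _ _ _ [s' c1 c2] _.
exists s'; split => //; split.
- by move=> x y; apply: (gal_inj gs); rewrite (galD gs) !c2.
- by move=> x y; apply: (gal_inj gs); rewrite (galM gs) !c2.
- by apply: (gal_inj gs); rewrite c2 (gal1 gs).
- by exists s.
- by move=> a; apply: (gal_inj gs); rewrite c2 (gali gs).
Qed.

Section Zeta.
Variables (N : nat) (z : L).
Hypothesis pz : N.-primitive_root z.

Definition Ez (y : L) := exists p : {poly K}, y = (map_poly iota p).[z].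

Lemma Ez_iota a : Ez (iota a).
Proof. by exists a%:P; rewrite map_polyC hornerC. Qed.
Lemma Ez_add x y : Ez x -> Ez y -> Ez (x + y).
Proof. by move=> [p ->] [q ->]; exists (p + q); rewrite rmorphD hornerD. Qed.
Lemma Ez_mul x y : Ez x -> Ez y -> Ez (x * y).
Proof. by move=> [p ->] [q ->]; exists (p * q); rewrite rmorphM hornerM. Qed.
Lemma Ez_z : Ez z.
Proof. by exists 'X; rewrite map_polyX hornerX. Qed.
Lemma Ez0 : Ez 0. Proof. by rewrite -(rmorph0 iota); apply: Ez_iota. Qed.
Lemma Ez1 : Ez 1. Proof. by rewrite -(rmorph1 iota); apply: Ez_iota. Qed.
Lemma Ez_exp x n : Ez x -> Ez (x ^+ n).
Proof. by move=> hx; elim: n => [|n IH]; [rewrite expr0; exact: Ez1|rewrite exprS; apply: Ez_mul]. Qed.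
Lemma Ez_zexp n : Ez (z ^+ n). Proof. exact: Ez_exp Ez_z. Qed.
Lemma Ez_unity x : x ^+ N = 1 -> Ez x.
Proof. by move=> /(prim_rootP pz) [i ->]; apply: Ez_zexp. Qed.
Lemma Ez_sum (I : Type) (r : seq I) (P : pred I) (F : I -> L) :
  (forall i, P i -> Ez (F i)) -> Ez (\sum_(i <- r | P i) F i).
Proof. by move=> h; apply: big_ind => //; [exact: Ez0|exact: Ez_add]. Qed.
Lemma Ez_inv x : Ez x -> x != 0 -> Ez x^-1.
Proof. by move=> hx x0; apply: (alg_inv algL Ez_iota Ez_add Ez_mul). Qed.

Lemma gal_Ez s t y : isGal iota s -> isGal iota t -> s z = t z -> Ez y -> s y = t y.
Proof. by move=> gs gt e [p ->]; rewrite !gal_horner // e. Qed.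

Lemma in_Kzeta_Ez y : Ez y -> in_Kzeta iota N y.
Proof. by move=> [p ->]; exists z; split => //; exists p. Qed.

Lemma gal_z_unity s : isGal iota s -> {j : 'I_N | s z = z ^+ j}.
Proof.
move=> gs; apply: (prim_rootP pz).
by rewrite -galX // (prim_expr_order pz) gal1.
Qed.

Section H90.
Hypothesis char0 : forall n, ((n%:R : L) == 0) = (n == 0)%N.
Variable f : (L -> L) -> L.
Hypotheses (fN : forall s, isGal iota s -> f s ^+ N = 1)
  (fc : forall s t, isGal iota s -> isGal iota t -> f (s \o t) = f s * s (f t))
  (ff : forall s t, isGal iota s -> isGal iota t -> s z = t z -> f s = f t).

Let N0 : (0 < N)%N := prim_order_gt0 pz.

Lemma f_neq0 s : isGal iota s -> f s != 0.
Proof.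
move=> gs; apply/eqP => h; have := fN gs; rewrite h expr0n.
by case: N N0 => // n _ /= /eqP; rewrite eq_sym oner_eq0.
Qed.

Definition cc (k : nat) : L :=
  xget 0 (fun c => exists r, [/\ isGal iota r, r z = z ^+ k & c = (f r)^-1]).

Lemma ccE r k : isGal iota r -> r z = z ^+ k -> cc k = (f r)^-1.
Proof.
move=> gr erz.
have := @xgetPex _ 0 (fun c => exists r, [/\ isGal iota r, r z = z ^+ k & c = (f r)^-1]).
case=> [|r' [gr' erz' e]]; first by exists (f r)^-1, r.
rewrite /cc; apply: (eq_trans e).
by rewrite (ff gr' gr) // erz erz'.
Qed.

Lemma cc0 k : ~ (exists r, isGal iota r /\ r z = z ^+ k) -> cc k = 0.
Proof.
move=> h; rewrite /cc; case: xgetP => // w _ [r [gr erz _]].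
by exfalso; apply: h; exists r.
Qed.

Lemma Ez_cc k : Ez (cc k).
Proof.
have [[r [gr erz]]|h] := pselect (exists r, isGal iota r /\ r z = z ^+ k).
  rewrite (ccE gr erz); apply: Ez_unity.
  by rewrite exprVn (fN gr) invr1.
by rewrite cc0 //; exact: Ez0.
Qed.

Definition beta (i : nat) : L := \sum_(k < N) cc k * z ^+ (k * i).

Lemma Ez_beta i : Ez (beta i).
Proof. by apply: Ez_sum => k _; apply: Ez_mul; [apply: Ez_cc|apply: Ez_zexp]. Qed.

Lemma beta_gal s i : isGal iota s -> s (beta i) = f s * beta i.
Proof.
move=> gs; have [j ej] := gal_z_unity gs.
pose h (k : 'I_N) : 'I_N := Ordinal (ltn_pmod (j * k) N0).
have zh (k : nat) : z ^+ (j * k %% N) = s (z ^+ k).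
  by rewrite (prim_expr_mod pz) galX // ej -exprM.
have hinj : injective h.
  move=> k1 k2 /(congr1 val) /= e.
  have : s (z ^+ k1) = s (z ^+ k2) by rewrite -!zh e.
  move/(gal_inj gs)/eqP; rewrite (eq_prim_root_expr pz) !modn_small // => /eqP.
  by move/val_inj.
have key (k : 'I_N) : s (cc k) = f s * cc (h k).
  have [[r [gr erz]]|nr] := pselect (exists r, isGal iota r /\ r z = z ^+ k).
    have grs : isGal iota (s \o r) by apply: gal_comp.
    have e2 : (s \o r) z = z ^+ (h k) by rewrite /= erz zh.
    rewrite (ccE gr erz) (ccE grs e2) (galV gs) (fc gs gr) invfM mulrA.
    by rewrite mulfV ?mul1r // f_neq0.
  rewrite cc0 // gal0 // cc0 ?mulr0 //.
  move=> [r [gr erz]]; apply: nr.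
  have [s' [gs' c1 c2]] := gal_inv gs.
  exists (s' \o r); split; first by apply: gal_comp.
  by rewrite /= erz /= zh c1.
rewrite /beta (gal_sum gs) mulr_sumr.
rewrite [RHS](reindex_inj hinj) /=.
apply: eq_bigr => k _; rewrite (galM gs) key -mulrA; congr (_ * (_ * _)).
by rewrite [RHS]exprM zh -(galX gs) -exprM.
Qed.

Lemma z_neq0 : z != 0.
Proof. by rewrite (prim_root_eq0 pz); case: N N0. Qed.

Lemma beta_nz : exists i, beta i != 0.
Proof.
apply: contrapT => hn.
have hb : forall i, beta i = 0.
  by move=> i; apply: contrapT => h; apply: hn; exists i; apply/eqP.
pose k0 : 'I_N := Ordinal (ltn_pmod 1 N0).
have zk0 : z ^+ (1 %% N) = z by rewrite (prim_expr_mod pz) expr1.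
have ck0 : cc (1 %% N) = (f id)^-1 by apply: ccE; [exact: gal_id|rewrite zk0].
have zn0 := z_neq0.
set T := \sum_(i < N) (z^-1) ^+ i * beta i.
have T0 : T = 0 by rewrite /T big1 // => i _; rewrite hb mulr0.
have T1 : T = cc (1 %% N) * N%:R.
  rewrite /T /beta.
  under eq_bigr do rewrite mulr_sumr.
  rewrite exchange_big (bigD1 k0) //= addrC big1 ?add0r.
    rewrite (eq_bigr (fun _ => cc (1 %% N))); first by rewrite sumr_const card_ord mulr_natr.
    by move=> i _; rewrite mulrCA exprM zk0 -exprMn mulVf // expr1n mulr1.
  move=> k nk.
  set w := z^-1 * z ^+ k.
  rewrite (eq_bigr (fun i : 'I_N => cc k * w ^+ i)); last first.
    by move=> i _; rewrite mulrCA exprM exprMn.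
  rewrite -mulr_sumr.
  have w1 : w != 1.
    apply: contraNneq nk => e; apply/eqP/val_inj => /=.
    have : z ^+ k = z ^+ (1 %% N).
      by rewrite zk0; apply: (mulfI (invr_neq0 zn0)); rewrite -/w e mulVf.
    by move/eqP; rewrite (eq_prim_root_expr pz) modn_mod (modn_small (ltn_ord k)) => /eqP.
  have wN : w ^+ N = 1.
    by rewrite exprMn exprVn -exprM mulnC exprM (prim_expr_order pz) expr1n invr1 mul1r.
  have : (w - 1) * \sum_(i < N) w ^+ i = 0 by rewrite -subrX1 wN subrr.
  move/eqP; rewrite mulf_eq0 subr_eq0 (negPf w1) /= => /eqP ->.
  by rewrite mulr0.
have : cc (1 %% N) * N%:R != 0.
  rewrite mulf_neq0 // ?char0 -?lt0n // ck0 invr_neq0 //.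
  by apply: f_neq0; exact: gal_id.
by rewrite -T1 T0 eqxx.
Qed.

End H90.

End Zeta.


Section Main.
Hypothesis char0 : forall n, ((n%:R : L) == 0) = (n == 0)%N.

Lemma forward (M : nat) (hCB : CB_prop iota M) n (n0 : (0 < n)%N) f
  (hf : cocycle iota (M * n) f) (hfac : factors_GN iota (M * n) f) :
  exists g, [/\ cocycle iota M g, continuous_coc iota g,
              factors_GN iota (M * n) g & cohom iota (M * n) f g].
Proof.
case: hCB => M0 hCB.
set N := (M * n)%N.
have N0 : (0 < N)%N by rewrite muln_gt0 M0 n0.
have [z pz] := prim_root_exists char0 N0.
case: hf => fN fc.
have ff : forall s t, isGal iota s -> isGal iota t -> s z = t z -> f s = f t.
  by move=> s t gs gt e; apply: (hfac z pz).
have [i bi] := beta_nz pz char0 fN ff.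
set b := beta N z f i in bi.
have hb : forall s, isGal iota s -> s b = f s * b.
  by move=> s gs; apply: (beta_gal pz fN fc ff).
have Eb : Ez z b by apply: (Ez_beta pz fN ff).
have hfix : forall s, isGal iota s -> s (b ^+ N) = b ^+ N.
  by move=> s gs; rewrite (galX gs) hb // exprMn (fN s gs) mul1r.
have [a ea] := fixed_in_K algL char0 hfix.
have [c ec] := hCB n n0 b a (in_Kzeta_Ez pz Eb) bi ea.
have bN0 : b ^+ N != 0 by rewrite expf_neq0.
have c0 : c != 0.
  by apply: contra_neq bN0 => c0; rewrite ea ec c0 expr0n gtn_eqF // rmorph0.
have ic0 : iota c != 0 by rewrite fmorph_eq0.
set eps := b ^+ M / iota c.
have epsn : eps ^+ n = 1.
  by rewrite /eps exprMn exprVn -exprM -/N ea ec rmorphXn mulfV // expf_neq0.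
have pzM : n.-primitive_root (z ^+ M).
  have := dvdn_prim_root pz (dvdn_mull M (dvdnn n)).
  by rewrite /N mulnK.
have [e ee] := prim_rootP pzM epsn.
set eta := z ^+ e.
have zn0 : z != 0 by rewrite (prim_root_eq0 pz) -lt0n.
have etan0 : eta != 0 by rewrite expf_neq0.
have etaM : eta ^+ M = eps by rewrite ee /eta exprAC.
have etaN : eta ^+ N = 1 by rewrite /eta exprAC (prim_expr_order pz) expr1n.
have b0 : b != 0 := bi.
set d := b / eta.
have d0 : d != 0 by rewrite mulf_neq0 ?invr_eq0.
have dM : d ^+ M = iota c.
  by rewrite /d exprMn exprVn etaM /eps invfM invrK mulVKf // expf_neq0.
have Ed : Ez z d.
  by apply: Ez_mul => //; apply: Ez_inv => //; apply: Ez_zexp.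
exists (fun s => s d / d); split.
- split.
    by move=> s gs; rewrite exprMn exprVn -(galX gs) dM (gali gs) mulfV.
  move=> s t gs gt /=.
  rewrite (galDiv gs); have sd0 := gal_neq0 gs d0.
  by field; rewrite sd0 d0.
- by exists [:: d] => s t gs gt h; rewrite h // inE.
- move=> z' pz' s t gs gt e'.
  have [k ek] := prim_rootP pz' (prim_expr_order pz).
  have ez : s z = t z by rewrite ek !galX // e'.
  by rewrite (gal_Ez gs gt ez Ed).
- exists eta; split => // s gs.
  have hb' := hb s gs.
  have fs : f s = s b / b by rewrite hb' mulfK.
  have eb : b = d * eta by rewrite /d divfK.
  rewrite fs eb (galM gs).
  have sd0 := gal_neq0 gs d0; have se0 := gal_neq0 gs etan0.
  by field; rewrite d0 etan0.
Qed.

Lemma backward (M : nat) (M0 : (0 < M)%N)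
  (H : forall n, (0 < n)%N -> forall f, cocycle iota (M * n) f ->
         factors_GN iota (M * n) f -> exists g, cocycle iota M g /\ cohom iota (M * n) f g) :
  CB_prop iota M.
Proof.
split => // n n0 y a hy y0 ey.
set N := (M * n)%N.
have yN0 : y ^+ N != 0 by rewrite expf_neq0.
have ia0 : iota a != 0 by rewrite -ey.
have hc : cocycle iota N (fun s => s y / y).
  split.
    by move=> s gs; rewrite exprMn exprVn -(galX gs) ey (gali gs) mulfV.
  move=> s t gs gt /=.
  rewrite (galDiv gs); have sy0 := gal_neq0 gs y0.
  by field; rewrite sy0 y0.
have hfac : factors_GN iota N (fun s => s y / y).
  move=> z' pz' s t gs gt e' /=.
  case: hy => z0 [pz0 [p ep]].
  have [k ek] := prim_rootP pz' (prim_expr_order pz0).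
  have ez : s z0 = t z0 by rewrite ek !galX // e'.
  by rewrite ep (gal_horner gs) (gal_horner gt) ez.
have [g [[gN gc] [c [cN hcs]]]] := H n n0 _ hc hfac.
have c0 : c != 0.
  by apply/eqP => c0; move: cN; rewrite c0 expr0n /N muln_eq0 gtn_eqF // gtn_eqF // => /eqP; rewrite eq_sym oner_eq0.
set w := y / c.
have w0 : w != 0 by rewrite mulf_neq0 ?invr_eq0.
have hw : forall s, isGal iota s -> s w = g s * w.
  move=> s gs; have e := hcs s gs.
  have sc0 := gal_neq0 gs c0; have sy0 := gal_neq0 gs y0.
  have eg : g s = s y / y * (c / s c).
    by rewrite e -[c / s c]invf_div mulfK // mulf_neq0 ?invr_eq0.
  rewrite /w (galDiv gs) eg.
  by field; rewrite y0 sc0 c0.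
have hfix : forall s, isGal iota s -> s (w ^+ M) = w ^+ M.
  by move=> s gs; rewrite (galX gs) hw // exprMn (gN s gs) mul1r.
have [b eb] := fixed_in_K algL char0 hfix.
exists b; apply: (fmorph_inj iota).
rewrite -ey rmorphXn -eb -exprM -/N.
by rewrite /w exprMn exprVn cN invr1 mulr1.
Qed.

End Main.

End Kummer.

Unset Implicit Arguments.
Theorem lemma2p1 (K : fieldType) (L : closedFieldType)
  (iota : {rmorphism K -> L})
  (charK : [pchar K] =i pred0)
  (algL : algebraic_over iota)
  (hKab : Kab_finite iota)
  (Lam : nat) (hLam : is_CB_number iota Lam) :
  (prop_i iota Lam /\ forall M : nat, prop_i iota M -> (Lam <= M)%N) /\
  (prop_ii iota Lam /\ forall M : nat, prop_ii iota M -> (Lam <= M)%N).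
Proof.
have char0 : forall n, ((n%:R : L) == 0) = (n == 0)%N.
  by move=> n; rewrite -(rmorph_nat iota) fmorph_eq0; apply: ((pcharf0P K).1 charK).
case: hLam => hCB minL.
have Lam0 : (0 < Lam)%N by case: hCB.
split; split.
- split => // n n0 f hf hfac.
  have [g [gc gcont _ gco]] := forward algL char0 hCB n0 hf hfac.
  by exists g; split => //; split.
- move=> M [M0 HM]; apply: minL; apply: (backward algL char0 M0) => n n0 f hf hfac.
  have [g [[gc _] gco]] := HM n n0 f hf hfac.
  by exists g.
- split => // n n0 f hf hfac.
  have [g [gc gcont gf gco]] := forward algL char0 hCB n0 hf hfac.
  by exists g; split.
- move=> M [M0 HM]; apply: minL; apply: (backward algL char0 M0) => n n0 f hf hfac.
  have [g [gc gf gco]] := HM n n0 f hf hfac.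
  by exists g.
Qed.
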